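(* Let $T\in\mathbb{N}$, $\alpha\in(0,1)$, $\lambda\ge0$, $\delta\in(0,1)$, and let $\mathcal{H}=\{k/(H-1):k=0,\dots,H-1\}$ with $H\ge2$. Run the ExAUL algorithm (described in the context) with $\eta=2\gamma=\sqrt{\ln|\mathcal{H}|/T}$ against an adaptive adversary. Then with probability at least $1-\delta$, $$\mathrm{Reg}_T:=\sum_{t=1}^T\ell_t(\tau_t)-\min_{\tau\in\mathcal{H}}\sum_{t=1}^T\ell_t(\tau)\le4\sqrt{T\ln|\mathcal{H}|}+\Big(1+\sqrt{\frac{T}{\ln|\mathcal{H}|}}\Big)\ln\frac2\delta.$$
   Context: Protocol. For $t=1,\dots,T$: an adaptive adversary chooses an input $\mathbf{x}_t$ (determining a score $f_t=f(\mathbf{x}_t,G(\mathbf{x}_t))\in[0,1)$ for a fixed generator $G$ and fixed scoring function $f$) and a feedback value $c_t\in[0,1]$ for the answer $G(\mathbf{x}_t)$; these may depend on $\tau_1,\dots,\tau_{t-1}$ but not on $\tau_t$. The learner picks $\tau_t\in\mathcal{H}$; it answers if $f_t\ge\tau_t$ and outputs IDK otherwise; it observes $f_t$ and, as partial feedback, $e_t$, which equals $c_t$ when it answers. Losses: for $\tau\in\mathcal{H}$, $a_t(\tau)=\mathbf{1}(f_t<\tau)$, $d_t(\tau,\alpha)=\mathbf{1}(f_t\ge\tau)c_t-\alpha\mathbf{1}(f_t\ge\tau)+\alpha$, $\ell_t(\tau)=\frac{a_t(\tau)+\lambda d_t(\tau,\alpha)}{1+\lambda}\in[0,1]$. ExAUL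 algorithm (parameters $\eta,\gamma>0$): $w_1(\tau)=1/|\mathcal{H}|$. At round $t$: $p_t(\tau)=w_t(\tau)/\sum_{\tau'}w_t(\tau')$; draw $\tau_t\sim p_t$; observe $f_t,e_t$; let $\mathcal{H}_t(\tau')=\{\tau\in\mathcal{H}:\tau\le f_t\}$ if $f_t\ge\tau'$ and $\{\tau\in\mathcal{H}:\tau>f_t\}$ otherwise; set for all $\tau\in\mathcal{H}$ $$\tilde\ell_t(\tau)=\frac{\ell_t(\tau)\,\mathbf{1}(\tau\in\mathcal{H}_t(\tau_t))}{\gamma+\sum_{\bar\tau\in\mathcal{H}_t(\tau_t)}\mathbf{1}(\tau\in\mathcal{H}_t(\bar\tau))\,p_t(\bar\tau)};$$ update $w_{t+1}(\tau)\propto\exp(-\eta\sum_{s=1}^t\tilde\ell_s(\tau))$. *)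

(* Defs.v *)
From HB Require Import structures.
From mathcomp Require Import all_boot all_order all_algebra.
From mathcomp Require Import reals.
From mathcomp.analysis Require Import sequences exp.
Set Implicit Arguments. Unset Strict Implicit. Unset Printing Implicit Defensive.
Import Order.TTheory GRing.Theory Num.Theory.
Local Open Scope ring_scope.

(* Hypothesis set H = {k/(H-1) : k = 0..H-1} with H = n.+1, indexed by 'I_n.+1.
   Rounds are 0-based: round t (t = 0..T-1) corresponds to round t+1 of the paper.
   A history h : seq 'I_n.+1 is the list of indices of the thresholds chosen
   in the previous rounds (so size h = t at round t).
   The adaptive adversary is given by f, c : nat -> seq 'I_n.+1 -> R:
   at round t with past choices h it plays f_t = f t h and c_t = c t h. *)
Section ExAUL.
Variable R : realType.
Variable n : nat.
Local Notation I := 'I_n.+1.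

Definition thr (k : I) : R := k%:R / n%:R.

Variables (alpha lambda eta gamma : R).
Variables (f c : nat -> seq I -> R).

Definition a_loss (ft tau : R) : R := ((ft < tau)%R : bool)%:R.
Definition d_loss (ft ct tau : R) : R :=
  ((tau <= ft)%R : bool)%:R * ct - alpha * ((tau <= ft)%R : bool)%:R + alpha.
Definition loss (ft ct tau : R) : R :=
  (a_loss ft tau + lambda * d_loss ft ct tau) / (1 + lambda).

Definition inHt (ft tau' tau : R) : bool :=
  if tau' <= ft then tau <= ft else ft < tau.

Definition softmax (L : I -> R) (k : I) : R :=
  expR (- eta * L k) / \sum_(j : I) expR (- eta * L j).

Definition ltilde (t : nat) (h : seq I) (k : I) (p : I -> R) (j : I) : R :=
  let ft := f t h in let ct := c t h in
  loss ft ct (thr j) * (inHt ft (thr k) (thr j) : bool)%:R /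
  (gamma + \sum_(b : I | inHt ft (thr k) (thr b))
              (inHt ft (thr b) (thr j) : bool)%:R * p b).

Fixpoint cumL_aux (t : nat) (h rest : seq I) (L : I -> R) : I -> R :=
  match rest with
  | [::] => L
  | k :: r => cumL_aux t.+1 (rcons h k) r
                (fun j => L j + ltilde t h k (softmax L) j)
  end.
Definition cumL (h : seq I) : I -> R := cumL_aux 0 [::] h (fun _ => 0).

Definition pdist (h : seq I) : I -> R := softmax (cumL h).

Fixpoint path_prob (h rest : seq I) : R :=
  match rest with
  | [::] => 1
  | k :: r => pdist h k * path_prob (rcons h k) r
  end.

Variable T : nat.

Definition learner_loss (s : T.-tuple I) : R :=
  \sum_(i < T) loss (f i (take i s)) (c i (take i s)) (thr (tnth s i)).
Definition fixed_loss (s : T.-tuple I) (k : I) : R :=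
  \sum_(i < T) loss (f i (take i s)) (c i (take i s)) (thr k).
Definition regret (s : T.-tuple I) : R :=
  learner_loss s - \big[Num.min/fixed_loss s ord0]_(k : I) fixed_loss s k.

Definition prob_regret_le (B : R) : R :=
  \sum_(s : T.-tuple I | regret s <= B) path_prob [::] s.
End ExAUL.

(* Main.v *)
Require Import Defs.
From HB Require Import structures.
From mathcomp Require Import all_boot all_order all_algebra.
From mathcomp Require Import reals.
From mathcomp.analysis Require Import sequences exp.
From mathcomp Require Import classical_sets boolp functions.
From mathcomp.analysis Require Import topology normedtype derive.
From mathcomp Require Import ring lra.
Import Order.TTheory GRing.Theory Num.Theory numFieldNormedType.Exports.
Local Open Scope ring_scope.

Section Ineq.
Variable R : realType.

Lemma ndecr0 (F : R -> R) (dF : R -> R) :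
  (forall x : R, is_derive x (1:R) F (dF x)) ->
  (forall x : R, 0 < x -> 0 <= dF x) ->
  forall y : R, 0 <= y -> F 0 <= F y.
Proof.
move=> hd hpos y y0.
apply: (@ger0_derive1_ndecry R F 0) => //.
- by move=> x; rewrite in_itv /= andbT => x0; rewrite derive1E derive_val; exact: hpos.
- apply: continuous_subspaceT => x.
  by apply: differentiable_continuous; apply/derivable1_diffP; case: (hd x).
Qed.

Lemma expN_le2 (x : R) : 0 <= x -> expR (- x) <= 1 - x + x ^+ 2 / 2.
Proof.
move=> x0.
have hd : forall y : R, is_derive y (1:R)
   ((@expR R) * (fun y => 1 - y + (y ^+ 2) / 2)) (expR y * (y^+2/2)).
  move=> y; apply: is_derive_eq.
  by rewrite !scaler0 !add0r /GRing.scale /= !mulr1; field.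
have hp : forall y : R, 0 < y -> 0 <= expR y * (y ^+ 2 / 2).
  by move=> y y0; apply: mulr_ge0; [exact: expR_ge0 | apply: divr_ge0; [exact: sqr_ge0|]].
have h : expR 0 * (1 - 0 + 0 ^+ 2 / 2) <= expR x * (1 - x + x ^+ 2 / 2).
  exact: (@ndecr0 _ _ hd hp x x0).
rewrite expR0 mul1r expr0n /= subr0 mul0r addr0 in h.
have e : expR (- x) * expR x = 1 by rewrite mulrC expRxMexpNx_1.
have hq : 0 <= expR (- x) by exact: expR_ge0.
apply: (le_trans (y := expR (- x) * (expR x * (1 - x + x ^+ 2 / 2)))).
  rewrite -[X in X <= _]mulr1 ler_wpM2l //.
by rewrite mulrA e mul1r.
Qed.

Lemma pade (y : R) : 0 <= y -> (2 - y) * expR y <= 2 + y.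
Proof.
move=> y0.
have hd : forall x : R, is_derive x (1:R)
   ((fun x => 2 + x) - (fun x => 2 - x) * (@expR R)) (1 - (1 - x) * expR x).
  move=> x; apply: is_derive_eq.
  by rewrite /GRing.scale /=; ring.
have hp : forall x : R, 0 < x -> 0 <= 1 - (1 - x) * expR x.
  move=> x x0; rewrite subr_ge0.
have h1 := expR_ge1Dx (- x).
have e : expR (- x) * expR x = 1 by rewrite mulrC expRxMexpNx_1.
have hq : 0 <= expR x by exact: expR_ge0.
  rewrite -e ler_wpM2r //; lra.
have h : (2 + 0) - (2 - 0) * expR 0 <= (2 + y) - (2 - y) * expR y.
  exact: (@ndecr0 _ _ hd hp y y0).
by move: h; rewrite expR0 addr0 subr0 mulr1 subrr subr_ge0.
Qed.

End Ineq.
Section Key.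
Variable R : realType.

Lemma key_ineq (g P l : R) : 0 < g -> 0 <= P -> 0 <= l <= 1 ->
  P * expR (2 * g * (l / (g + P))) <= P + 2 * g * l.
Proof.
move=> g0 P0 /andP[l0 l1].
have [->|Pn0] := eqVneq P 0; first by rewrite mul0r add0r; apply: mulr_ge0 => //; lra.
have Pp : 0 < P by rewrite lt_def Pn0.
have gP : 0 < g + P by lra.
set y := 2 * g * (l / (g + P)).
have hy : y * (g + P) = 2 * g * l by rewrite /y; field; lra.
have y0 : 0 <= y by rewrite /y; apply: mulr_ge0; [lra| apply: divr_ge0; lra].
have y2 : y < 2.
  have : y * (g + P) < 2 * (g + P) by rewrite hy; nra.
  by rewrite ltr_pM2r.
have hp := @pade R y y0.
have e0 : 0 < expR y := expR_gt0 y.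
have h1 : (2 - y) * (P * expR y) <= (2 - y) * (P + 2 * g * l).
  have h2 : P * ((2 - y) * expR y) <= P * (2 + y) by rewrite ler_wpM2l //; lra.
  have h3 : P * (2 + y) <= (2 - y) * (P + y * (g + P)).
    have : 0 <= y * (2 * g - y * (g + P)) by rewrite hy; apply: mulr_ge0 => //; nra.
    nra.
  rewrite -hy; apply: le_trans h3; rewrite mulrA (mulrC (2 - y)) -mulrA; exact: h2.
by rewrite ler_pM2l in h1; lra.
Qed.

Lemma comb_ineq (x : R) : expR (- x) * (1 + x) <= 1.
Proof.
have h := expR_ge1Dx x.
have e : expR (- x) * expR x = 1 by rewrite mulrC expRxMexpNx_1.
rewrite -[leRHS]e ler_wpM2l //; exact: expR_ge0.
Qed.
End Key.
Section Algo.
Variable R : realType.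
Variable n : nat.
Local Notation I := 'I_n.+1.
Variables (alpha lambda eta gamma : R).
Variables (f c : nat -> seq I -> R).

Local Notation pdist := (pdist alpha lambda eta gamma f c).
Local Notation cumL := (cumL alpha lambda eta gamma f c).
Local Notation path_prob := (path_prob alpha lambda eta gamma f c).
Local Notation ltilde := (ltilde alpha lambda gamma f c).

Lemma sumexp_gt0 (L : I -> R) : 0 < \sum_(j : I) expR (- eta * L j).
Proof.
rewrite (bigD1 ord0) //=; apply: ltr_pwDl; first exact: expR_gt0.
by apply: sumr_ge0 => j _; exact: expR_ge0.
Qed.

Lemma softmax_ge0 (L : I -> R) k : 0 <= softmax eta L k.
Proof. by rewrite /softmax divr_ge0 // ?expR_ge0 // ltW // sumexp_gt0. Qed.

Lemma softmax_sum (L : I -> R) : \sum_k softmax eta L k = 1.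
Proof.
rewrite /softmax -big_distrl /= divff //; exact: lt0r_neq0 (sumexp_gt0 L).
Qed.

Lemma pdist_ge0 h k : 0 <= pdist h k.
Proof. exact: softmax_ge0. Qed.

Lemma pdist_sum h : \sum_k pdist h k = 1.
Proof. exact: softmax_sum. Qed.

Lemma cumL_aux_rcons t h r k L :
  cumL_aux alpha lambda eta gamma f c t h (rcons r k) L =
  (fun j => cumL_aux alpha lambda eta gamma f c t h r L j +
     ltilde (t + size r) (h ++ r) k
       (softmax eta (cumL_aux alpha lambda eta gamma f c t h r L)) j).
Proof.
elim: r t h L => [|k0 r IH] t h L /=; first by rewrite addn0 cats0.
by rewrite IH addSnnS cat_rcons.
Qed.

Lemma cumL_rcons h k :
  cumL (rcons h k) = (fun j => cumL h j + ltilde (size h) h k (pdist h) j).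
Proof. by rewrite /Defs.cumL cumL_aux_rcons add0n cat0s. Qed.

Lemma path_prob_ge0 h s : 0 <= path_prob h s.
Proof.
elim: s h => [|k s IH] h /=; first exact: ler01.
by apply: mulr_ge0; [exact: pdist_ge0 | exact: IH].
Qed.

Lemma sum_tuple_S m (F : m.+1.-tuple I -> R) :
  \sum_(s : m.+1.-tuple I) F s = \sum_(k : I) \sum_(s : m.-tuple I) F [tuple of k :: s].
Proof.
rewrite pair_big /=.
rewrite (reindex (fun p : I * m.-tuple I => [tuple of p.1 :: p.2])) //=.
exists (fun s : m.+1.-tuple I => (thead s, [tuple of behead s])).
  by move=> [k s] _ /=; rewrite theadE; congr pair; apply: val_inj.
by move=> s _ /=; rewrite [RHS]tuple_eta.
Qed.

Lemma sum_tuple_0 (F : 0.-tuple I -> R) :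
  \sum_(s : 0.-tuple I) F s = F [tuple].
Proof.
rewrite (eq_bigr (fun _ => F [tuple])); last by move=> s _; rewrite tuple0.
by rewrite sumr_const card_tuple expn0.
Qed.

Lemma path_prob_total m h : \sum_(s : m.-tuple I) path_prob h s = 1.
Proof.
elim: m h => [|m IH] h; first by rewrite sum_tuple_0.
rewrite sum_tuple_S /=.
under eq_bigr => k _ do rewrite -big_distrr /= IH mulr1.
exact: pdist_sum.
Qed.

Lemma supermart (z : nat -> seq I -> I -> R) :
  (forall t h, \sum_k pdist h k * expR (z t h k) <= 1) ->
  forall m h, \sum_(s : m.-tuple I) path_prob h s *
     expR (\sum_(i < m) z (size h + i)%N (h ++ take i s) (nth ord0 s i)) <= 1.
Proof.
move=> Hz; elim=> [|m IH] h.
  by rewrite sum_tuple_0 big_ord0 expR0 mulr1.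
rewrite sum_tuple_S /=.
apply: le_trans (Hz (size h) h); apply: ler_sum => k _.
have -> : \sum_(s : m.-tuple I) pdist h k * path_prob (rcons h k) s *
    expR (\sum_(i < m.+1) z (size h + i)%N (h ++ take i (k :: s)) (nth ord0 (k :: s) i))
  = pdist h k * expR (z (size h) h k) *
    \sum_(s : m.-tuple I) (path_prob (rcons h k) s *
    expR (\sum_(i < m) z (size (rcons h k) + i)%N (rcons h k ++ take i s) (nth ord0 s i))).
  rewrite big_distrr /=; apply: eq_bigr => s _.
  rewrite big_ord_recl /= addn0 cats0 expRD.
  have -> : \sum_(i < m) z (size h + bump 0 i)%N (h ++ k :: take (0 + i) s)
          (nth ord0 s (0 + i)) =
     \sum_(i < m) z (size (rcons h k) + i)%N (rcons h k ++ take i s) (nth ord0 s i).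
    by apply: eq_bigr => i _; rewrite /bump /= !add0n size_rcons cat_rcons add1n addSnnS.
  by ring.
rewrite -[leRHS]mulr1 ler_wpM2l //.
by apply: mulr_ge0; [exact: pdist_ge0 | exact: expR_ge0].
Qed.

End Algo.
Ltac fl := field; repeat (match goal with |- is_true (_ && _) => apply/andP; split end);
  try (apply/eqP => Hfl; lra).

Section Rounds.
Variable R : realType.
Variable n : nat.
Local Notation I := 'I_n.+1.
Variables (alpha lambda eta gamma : R).
Variables (f c : nat -> seq I -> R).
Hypothesis g0 : 0 < gamma.
Hypothesis eta0 : 0 <= eta.
Hypothesis lam0 : 0 <= lambda.
Hypothesis alpha0 : 0 <= alpha.
Hypothesis alpha1 : alpha <= 1.
Hypothesis c01 : forall t h, 0 <= c t h <= 1.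

Ltac hyps := have Hg0 := g0; have Heta0 := eta0; have Hlam0 := lam0;
  have Ha0 := alpha0; have Ha1 := alpha1.

Local Notation pdist := (pdist alpha lambda eta gamma f c).
Local Notation ltilde := (ltilde alpha lambda gamma f c).
Local Notation thr := (@Defs.thr R n).

Definition PA t h := \sum_(b | thr b <= f t h) pdist h b.
Definition PB t h := \sum_(b | f t h < thr b) pdist h b.
Definition lA t h := lambda * c t h / (1 + lambda).
Definition lB := (1 + lambda * alpha) / (1 + lambda).
Definition eA t h (k : I) := if thr k <= f t h then lA t h / (gamma + PA t h) else 0.
Definition eB t h (k : I) := if thr k <= f t h then 0 else lB / (gamma + PB t h).

Lemma loss_side t h j : loss alpha lambda (f t h) (c t h) (thr j) =
  if thr j <= f t h then lA t h else lB.
Proof.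
hyps.
rewrite /loss /a_loss /d_loss /lA /lB; case: ifP => hj.
  by rewrite ltNge hj /=; fl.
by rewrite ltNge hj /=; fl.
Qed.

Lemma split_side t h (G : bool -> R) :
  \sum_k pdist h k * G (thr k <= f t h) = PA t h * G true + PB t h * G false.
Proof.
hyps.
rewrite (bigID (fun k => thr k <= f t h)) /= /PA /PB !big_distrl /=.
congr (_ + _); first by apply: eq_bigr => k ->.
rewrite (eq_bigl (fun k => f t h < thr k)); last by move=> k; rewrite ltNge.
by apply: eq_bigr => k hk; rewrite leNgt hk.
Qed.

Lemma split_side2 t h (GA GB : R) :
  \sum_k pdist h k * (if thr k <= f t h then GA else GB) = PA t h * GA + PB t h * GB.
Proof. exact: (split_side t h (fun b => if b then GA else GB)). Qed.

Lemma PAB t h : PA t h + PB t h = 1.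
Proof.
hyps.
have := split_side t h (fun _ => 1).
by rewrite !mulr1 => <-; under eq_bigr do rewrite mulr1; exact: pdist_sum.
Qed.

Lemma PA_ge0 t h : 0 <= PA t h.
Proof. by apply: sumr_ge0 => k _; exact: pdist_ge0. Qed.
Lemma PB_ge0 t h : 0 <= PB t h.
Proof. by apply: sumr_ge0 => k _; exact: pdist_ge0. Qed.

Lemma lA01 t h : 0 <= lA t h <= 1.
Proof.
hyps.
have := c01 t h => /andP[? ?].
rewrite /lA; apply/andP; split; first by apply: divr_ge0; nra.
rewrite ler_pdivrMr; last lra. nra.
Qed.

Lemma lB01 : 0 <= lB <= 1.
Proof.
hyps.
rewrite /lB; apply/andP; split; first by apply: divr_ge0; nra.
rewrite ler_pdivrMr; last lra. nra.
Qed.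

Lemma ltilde_side t h k j : ltilde t h k (pdist h) j =
  if thr j <= f t h then eA t h k else eB t h k.
Proof.
hyps.
rewrite /Defs.ltilde /inHt /eA /eB loss_side.
case hk: (thr k <= f t h); case hj: (thr j <= f t h) => /=.
- rewrite mulr1; congr (_ / (_ + _)).
  by apply: eq_bigr => b hb; rewrite hb mul1r.
- by rewrite (_ : false%:R = 0 :> R) // mulr0 mul0r.
- by rewrite ltNge hj (_ : false%:R = 0 :> R) // mulr0 mul0r.
- rewrite ltNge hj /= mulr1; congr (_ / (_ + _)).
  by apply: eq_bigr => b hb; rewrite leNgt hb mul1r.
Qed.

Lemma learner_side t h k : loss alpha lambda (f t h) (c t h) (thr k) =
  PA t h * eA t h k + PB t h * eB t h k + gamma * (eA t h k + eB t h k).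
Proof.
hyps.
have := PA_ge0 t h; have := PB_ge0 t h => ? ?.
rewrite loss_side /eA /eB; case: ifP => hk; fl.
Qed.

Lemma eA_ge0 t h k : 0 <= eA t h k.
Proof.
hyps.
have := PA_ge0 t h; have := lA01 t h => /andP[? ?] ?.
by rewrite /eA; case: ifP => _ //; apply: divr_ge0; lra.
Qed.
Lemma eB_ge0 t h k : 0 <= eB t h k.
Proof.
hyps.
have := PB_ge0 t h; have := lB01 => /andP[? ?] ?.
by rewrite /eB; case: ifP => _ //; apply: divr_ge0; lra.
Qed.

Lemma PeA_le1 t h k : PA t h * eA t h k <= 1.
Proof.
hyps.
have := PA_ge0 t h; have := lA01 t h => /andP[? ?] ?.
rewrite /eA; case: ifP => _; last by rewrite mulr0.
rewrite mulrA ler_pdivrMr; last lra. nra.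
Qed.
Lemma PeB_le1 t h k : PB t h * eB t h k <= 1.
Proof.
hyps.
have := PB_ge0 t h; have := lB01 => /andP[? ?] ?.
rewrite /eB; case: ifP => _; first by rewrite mulr0.
rewrite mulrA ler_pdivrMr; last lra. nra.
Qed.

Lemma ew_step t h k :
  \sum_j pdist h j * expR (- eta * ltilde t h k (pdist h) j) <=
  expR (- eta * (PA t h * eA t h k + PB t h * eB t h k)
        + eta ^+ 2 / 2 * (eA t h k + eB t h k)).
Proof.
hyps.
have e : forall j, pdist h j * expR (- eta * ltilde t h k (pdist h) j) =
   pdist h j * (if thr j <= f t h then expR (- eta * eA t h k) else expR (- eta * eB t h k)).
  by move=> j; rewrite ltilde_side; case: ifP.
rewrite (eq_bigr _ (fun j _ => e j)) split_side2.
apply: le_trans (expR_ge1Dx _).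
have hA := @expN_le2 R _ (mulr_ge0 eta0 (eA_ge0 t h k)).
have hB := @expN_le2 R _ (mulr_ge0 eta0 (eB_ge0 t h k)).
rewrite !mulNr.
have pa := PA_ge0 t h; have pb := PB_ge0 t h; have pab := PAB t h.
have a1 := PeA_le1 t h k; have b1 := PeB_le1 t h k.
have a0 := eA_ge0 t h k; have b0 := eB_ge0 t h k.
have hA' := ler_wpM2l pa hA; have hB' := ler_wpM2l pb hB.
have q1 : PA t h * (eA t h k) ^+ 2 <= eA t h k by nra.
have q2 : PB t h * (eB t h k) ^+ 2 <= eB t h k by nra.
have e2 : 0 <= eta ^+ 2 / 2 by apply: divr_ge0 => //; exact: sqr_ge0.
have q3 : eta ^+ 2 / 2 * (PA t h * eA t h k ^+ 2 + PB t h * eB t h k ^+ 2)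
   <= eta ^+ 2 / 2 * (eA t h k + eB t h k) by apply: ler_wpM2l => //; lra.
set x := eA t h k in hA' q1 q3 *; set y := eB t h k in hB' q2 q3 *.
set P1 := PA t h in hA' q1 q3 pab *; set P2 := PB t h in hB' q2 q3 pab *.
apply: le_trans (lerD hA' hB') _.
have -> : P1 * (1 - eta * x + (eta * x) ^+ 2 / 2) + P2 * (1 - eta * y + (eta * y) ^+ 2 / 2)
   = (P1 + P2) - eta * (P1 * x + P2 * y) + eta ^+ 2 / 2 * (P1 * x ^+ 2 + P2 * y ^+ 2).
  by ring.
by rewrite pab -addrA lerD2l lerD2l.
Qed.

Lemma conc1 t h :
  \sum_k pdist h k * expR (2 * gamma * ((eA t h k + eB t h k) - (lA t h + lB))) <= 1.
Proof.
hyps.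
have e : forall k, pdist h k * expR (2 * gamma * ((eA t h k + eB t h k) - (lA t h + lB))) =
   pdist h k * (if thr k <= f t h then
       expR (- (2 * gamma * (lA t h + lB))) * expR (2 * gamma * (lA t h / (gamma + PA t h)))
       else expR (- (2 * gamma * (lA t h + lB))) * expR (2 * gamma * (lB / (gamma + PB t h)))).
  move=> k; rewrite -!expRD /eA /eB; case: ifP => _; congr (_ * expR _); ring.
rewrite (eq_bigr _ (fun j _ => e j)) split_side2.
have pa := PA_ge0 t h; have pb := PB_ge0 t h; have pab := PAB t h.
have k1 := @key_ineq R _ _ _ g0 pa (lA01 t h).
have k2 := @key_ineq R _ _ _ g0 pb lB01.
have ex := expR_ge0 (- (2 * gamma * (lA t h + lB))).
apply: le_trans (@comb_ineq R (2 * gamma * (lA t h + lB))).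
rewrite (mulrCA (PA t h)) (mulrCA (PB t h)) -mulrDr.
apply: ler_wpM2l => //; lra.
Qed.

Lemma conc2 t h j :
  \sum_k pdist h k * expR (2 * gamma * (ltilde t h k (pdist h) j
          - loss alpha lambda (f t h) (c t h) (thr j))) <= 1.
Proof.
hyps.
have pa := PA_ge0 t h; have pb := PB_ge0 t h; have pab := PAB t h.
have k1 := @key_ineq R _ _ _ g0 pa (lA01 t h).
have k2 := @key_ineq R _ _ _ g0 pb lB01.
case: ifP (loss_side t h j) (ltilde_side t h ^~ j) => hj -> lt.
- have e : forall k, pdist h k * expR (2 * gamma * (ltilde t h k (pdist h) j - lA t h)) =
   pdist h k * (if thr k <= f t h then
       expR (- (2 * gamma * lA t h)) * expR (2 * gamma * (lA t h / (gamma + PA t h)))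
       else expR (- (2 * gamma * lA t h))).
    move=> k; rewrite lt /eA; case: ifP => _; rewrite -?expRD; congr (_ * expR _); ring.
  rewrite (eq_bigr _ (fun j _ => e j)) split_side2.
  have ex := expR_ge0 (- (2 * gamma * lA t h)).
  apply: le_trans (@comb_ineq R (2 * gamma * lA t h)).
  rewrite mulrCA [PB t h * _]mulrC -mulrDr.
  apply: ler_wpM2l => //; lra.
- have e : forall k, pdist h k * expR (2 * gamma * (ltilde t h k (pdist h) j - lB)) =
   pdist h k * (if thr k <= f t h then expR (- (2 * gamma * lB)) else
       expR (- (2 * gamma * lB)) * expR (2 * gamma * (lB / (gamma + PB t h)))).
    move=> k; rewrite lt /eB; case: ifP => _; rewrite -?expRD; congr (_ * expR _); ring.
  rewrite (eq_bigr _ (fun j _ => e j)) split_side2.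
  have ex := expR_ge0 (- (2 * gamma * lB)).
  apply: le_trans (@comb_ineq R (2 * gamma * lB)).
  rewrite [PB t h * _]mulrCA [PA t h * _]mulrC -mulrDr.
  apply: ler_wpM2l => //; lra.
Qed.

End Rounds.
Section PathLevel.
Variable R : realType.
Variable n : nat.
Local Notation I := 'I_n.+1.
Variables (alpha lambda eta gamma : R).
Variables (f c : nat -> seq I -> R).
Hypothesis g0 : 0 < gamma.
Hypothesis eta0 : 0 <= eta.
Hypothesis lam0 : 0 <= lambda.
Hypothesis alpha0 : 0 <= alpha.
Hypothesis alpha1 : alpha <= 1.
Hypothesis c01 : forall t h, 0 <= c t h <= 1.

Local Notation pdist := (pdist alpha lambda eta gamma f c).
Local Notation cumL := (cumL alpha lambda eta gamma f c).
Local Notation ltilde := (ltilde alpha lambda gamma f c).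
Local Notation thr := (@Defs.thr R n).
Local Notation PA := (@PA R n alpha lambda eta gamma f c).
Local Notation PB := (@PB R n alpha lambda eta gamma f c).
Local Notation lA := (@lA R n lambda c).
Local Notation lB := (@lB R alpha lambda).
Local Notation eA := (@eA R n alpha lambda eta gamma f c).
Local Notation eB := (@eB R n alpha lambda eta gamma f c).

Definition psum (s : seq I) (F : nat -> seq I -> I -> R) :=
  \sum_(i < size s) F i (take i s) (nth ord0 s i).

Lemma psum_rcons s k F : psum (rcons s k) F = psum s F + F (size s) s k.
Proof.
rewrite /psum size_rcons big_ord_recr /= nth_rcons ltnn eqxx.
rewrite -cats1 take_size_cat //; congr (_ + _).
apply: eq_bigr => i _; rewrite takel_cat ?nth_cat ?ltn_ord //.
exact: ltnW.
Qed.

Lemma psum_nil F : psum [::] F = 0.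
Proof. by rewrite /psum big_ord0. Qed.

Lemma cumL_psum s j : cumL s j = psum s (fun i h k => ltilde i h k (pdist h) j).
Proof.
elim/last_ind: s => [|s k IH]; first by rewrite psum_nil.
by rewrite cumL_rcons psum_rcons IH.
Qed.

Definition Wt s := \sum_(j : I) expR (- eta * cumL s j).

Lemma Wt_gt0 s : 0 < Wt s.
Proof. exact: sumexp_gt0. Qed.

Definition ga i h k := - eta * (PA i h * eA i h k + PB i h * eB i h k)
        + eta ^+ 2 / 2 * (eA i h k + eB i h k).

Lemma Wt_bound s : Wt s <= (n.+1)%:R * expR (psum s ga).
Proof.
elim/last_ind: s => [|s k IH].
  rewrite psum_nil expR0 mulr1 /Wt.
  rewrite (eq_bigr (fun _ => 1)); first by rewrite sumr_const card_ord.
  by move=> j _; rewrite /Defs.cumL /= mulr0 expR0.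
rewrite psum_rcons expRD mulrA.
have -> : Wt (rcons s k) = Wt s * \sum_j pdist s j * expR (- eta * ltilde (size s) s k (pdist s) j).
  rewrite /Wt cumL_rcons big_distrr /=; apply: eq_bigr => j _.
  rewrite mulrDr expRD mulrA; congr (_ * _).
  have hW := lt0r_neq0 (Wt_gt0 s).
  by rewrite /Defs.pdist /softmax mulrCA mulfV // mulr1.
apply: ler_pM.
- exact: ltW (Wt_gt0 s).
- by apply: sumr_ge0 => j _; apply: mulr_ge0; [exact: pdist_ge0 | exact: expR_ge0].
- exact: IH.
- by apply: ew_step.
Qed.

Lemma ew_path s j : - eta * cumL s j <= ln (n.+1)%:R + psum s ga.
Proof.
have h1 : expR (- eta * cumL s j) <= Wt s.
  rewrite /Wt (bigD1 j) //= lerDl; apply: sumr_ge0 => i _; exact: expR_ge0.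
have h2 := le_trans h1 (Wt_bound s).
have hN : 0 < (n.+1)%:R :> R by rewrite ltr0n.
rewrite -ler_expR expRD lnK //; exact: h2.
Qed.

End PathLevel.
Section Final.
Variable R : realType.
Variable n : nat.
Local Notation I := 'I_n.+1.
Variables (alpha lambda eta gamma : R).
Variables (f c : nat -> seq I -> R).
Hypothesis g0 : 0 < gamma.
Hypothesis eta0 : 0 <= eta.
Hypothesis lam0 : 0 <= lambda.
Hypothesis alpha0 : 0 <= alpha.
Hypothesis alpha1 : alpha <= 1.
Hypothesis c01 : forall t h, 0 <= c t h <= 1.
Hypothesis heta : eta = 2 * gamma.
Variable T : nat.

Local Notation pdist := (pdist alpha lambda eta gamma f c).
Local Notation cumL := (cumL alpha lambda eta gamma f c).
Local Notation ltilde := (ltilde alpha lambda gamma f c).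
Local Notation thr := (@Defs.thr R n).
Local Notation PA := (@PA R n alpha lambda eta gamma f c).
Local Notation PB := (@PB R n alpha lambda eta gamma f c).
Local Notation lA := (@lA R n lambda c).
Local Notation lB := (@lB R alpha lambda).
Local Notation eA := (@eA R n alpha lambda eta gamma f c).
Local Notation eB := (@eB R n alpha lambda eta gamma f c).
Local Notation psum := (@psum R n).
Local Notation lossj j := (fun i h (k : I) => loss alpha lambda (f i h) (c i h) (thr j)).

Definition z1 i h k := 2 * gamma * ((eA i h k + eB i h k) - (lA i h + lB)).
Definition z2 j i h k := 2 * gamma * (ltilde i h k (pdist h) j
          - loss alpha lambda (f i h) (c i h) (thr j)).

Lemma psum_tuple (s : T.-tuple I) F :
  psum s F = \sum_(i < T) F i (take i s) (tnth s i).
Proof.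
rewrite (eq_bigr (fun i : 'I_T => F i (take i s) (nth ord0 s i))); last first.
  by move=> i _; rewrite (tnth_nth ord0).
rewrite /psum.
have H : forall m1 m2 (G : nat -> R), m1 = m2 ->
   \sum_(i < m1) G i = \sum_(i < m2) G i by move=> m1 m2 G ->.
exact: (H _ _ (fun i => F i (take i s) (nth ord0 s i)) (size_tuple s)).
Qed.

Lemma psumD s F G : psum s (fun i h k => F i h k + G i h k) = psum s F + psum s G.
Proof. exact: big_split. Qed.
Lemma psumB s F G : psum s (fun i h k => F i h k - G i h k) = psum s F - psum s G.
Proof. by rewrite /psum sumrB. Qed.
Lemma psumZ s a F : psum s (fun i h k => a * F i h k) = a * psum s F.
Proof. by rewrite /psum mulr_sumr. Qed.
Lemma psum_le s F G : (forall i h k, F i h k <= G i h k) -> psum s F <= psum s G.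
Proof. by move=> H; apply: ler_sum => i _. Qed.

Lemma learner_psum (s : T.-tuple I) :
  learner_loss alpha lambda f c s =
  psum s (fun i h k => PA i h * eA i h k + PB i h * eB i h k)
  + gamma * psum s (fun i h k => eA i h k + eB i h k).
Proof.
rewrite -psumZ -psumD psum_tuple /learner_loss.
apply: eq_bigr => i _.
by apply: learner_side.
Qed.

Lemma fixed_psum (s : T.-tuple I) j :
  fixed_loss alpha lambda f c s j = psum s (lossj j).
Proof. by rewrite psum_tuple. Qed.

Lemma psum_z1 s : psum s z1 = 2 * gamma * (psum s (fun i h k => eA i h k + eB i h k)
    - psum s (fun i h k => lA i h + lB)).
Proof. by rewrite /psum -sumrB mulr_sumr. Qed.

Lemma psum_z2 s j : psum s (z2 j) = 2 * gamma * (cumL s j - psum s (lossj j)).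
Proof. by rewrite cumL_psum /psum -sumrB mulr_sumr. Qed.

Lemma psum_ga s : psum s (@ga R n alpha lambda eta gamma f c) =
   - eta * psum s (fun i h k => PA i h * eA i h k + PB i h * eB i h k)
   + eta ^+ 2 / 2 * psum s (fun i h k => eA i h k + eB i h k).
Proof. by rewrite /psum !mulr_sumr -big_split. Qed.

Lemma det_bound (s : T.-tuple I) (th1 th2 : R) :
  psum s z1 <= th1 -> (forall j, psum s (z2 j) <= th2) ->
  forall j, eta * (learner_loss alpha lambda f c s - fixed_loss alpha lambda f c s j)
   <= ln (n.+1)%:R + th2 + 2 * eta ^+ 2 * T%:R + eta * th1.
Proof.
move=> h1 h2 j.
have hew := @ew_path R n alpha lambda eta gamma f c g0 eta0 lam0 alpha0 alpha1 c01 s j.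
rewrite psum_ga in hew.
have hz1 := h1; rewrite psum_z1 -heta in hz1.
have hz2 := h2 j; rewrite psum_z2 -heta -fixed_psum in hz2.
have hL : psum s (fun i h k => lA i h + lB) <= 2 * T%:R.
  have : psum s (fun i h k => lA i h + lB) <= psum s (fun _ _ _ => 2).
    apply: psum_le => i h k.
    have := @lA01 R n alpha lambda eta gamma c g0 eta0 lam0 alpha0 alpha1 c01 i h.
    have := @lB01 R alpha lambda eta gamma g0 eta0 lam0 alpha0 alpha1; lra.
  move=> hle; apply: le_trans hle _.
  by rewrite /psum sumr_const card_ord size_tuple mulr_natr.
rewrite learner_psum.
move: hew hz1 hz2 hL.
move: (psum s (fun i h k => PA i h * eA i h k + PB i h * eB i h k)) => a.
move: (psum s (fun i h k => eA i h k + eB i h k)) => b.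
move: (psum s (fun i h k => lA i h + lB)) => L.
move: (cumL s j) => C.
move: (fixed_loss alpha lambda f c s j) => F.
move=> hew hz1 hz2 hL.
have hz1' : eta ^+ 2 * (b - L) <= eta * th1.
  by rewrite expr2 -mulrA ler_wpM2l.
have hL' : eta ^+ 2 * L <= eta ^+ 2 * (2 * T%:R).
  by rewrite ler_wpM2l // sqr_ge0.
have hg : gamma = eta / 2 by rewrite heta; field.
rewrite hg.
have e1 : eta * (a + eta / 2 * b - F) = eta * a + eta ^+ 2 / 2 * b - eta * F.
  by rewrite expr2; field.
rewrite e1.
have e2 : eta * (C - F) = eta * C - eta * F by ring.
have e3 : - eta * C = - (eta * C) by ring.
have e4 : - eta * a = - (eta * a) by ring.
have e5 : eta ^+ 2 * (b - L) = eta ^+ 2 * b - eta ^+ 2 * L by ring.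
have e6 : eta ^+ 2 * (2 * T%:R) = 2 * eta ^+ 2 * T%:R by ring.
have e7 : eta ^+ 2 / 2 * b = (eta ^+ 2 * b) / 2 by ring.
rewrite e2 in hz2; rewrite e3 e4 e7 in hew; rewrite e5 in hz1'; rewrite e6 in hL'.
lra.
Qed.
End Final.
Lemma expR_ge1' (R : realType) (x : R) : 0 <= x -> 1 <= expR x.
Proof. move=> x0; have := expR_ge1Dx x; lra. Qed.

Section Prob.
Variable R : realType.
Variable n : nat.
Local Notation I := 'I_n.+1.
Variables (alpha lambda eta gamma : R).
Variables (f c : nat -> seq I -> R).
Hypothesis g0 : 0 < gamma.
Hypothesis eta0 : 0 <= eta.
Hypothesis lam0 : 0 <= lambda.
Hypothesis alpha0 : 0 <= alpha.
Hypothesis alpha1 : alpha <= 1.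
Hypothesis c01 : forall t h, 0 <= c t h <= 1.
Variable T : nat.

Local Notation pp := (path_prob alpha lambda eta gamma f c [::]).
Local Notation psum := (@psum R n).
Local Notation z1 := (@z1 R n alpha lambda eta gamma f c).
Local Notation z2 := (@z2 R n alpha lambda eta gamma f c).

Lemma psum_sm (s : T.-tuple I) F :
  psum s F = \sum_(i < T) F (size ([::] : seq I) + i)%N (([::] : seq I) ++ take i s) (nth ord0 s i).
Proof. by rewrite psum_tuple; apply: eq_bigr => i _; rewrite (tnth_nth ord0). Qed.

Lemma sm_bound (z : nat -> seq I -> I -> R) :
  (forall t h, \sum_k pdist alpha lambda eta gamma f c h k * expR (z t h k) <= 1) ->
  \sum_(s : T.-tuple I) pp s * expR (psum s z) <= 1.
Proof.
move=> Hz.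
under eq_bigr => s _ do rewrite psum_sm.
exact: (@supermart R n alpha lambda eta gamma f c z Hz T [::]).
Qed.

Lemma prob_main (th1 th2 B : R) :
  (forall s : T.-tuple I, psum s z1 <= th1 -> (forall j, psum s (z2 j) <= th2) ->
      regret alpha lambda f c s <= B) ->
  1 - (expR (- th1) + (n.+1)%:R * expR (- th2)) <=
  prob_regret_le alpha lambda eta gamma f c T B.
Proof.
move=> Hdet.
pose Phi (s : T.-tuple I) := expR (- th1) * expR (psum s z1) +
   \sum_(j : I) expR (- th2) * expR (psum s (z2 j)).
have Phi0 : forall s, 0 <= Phi s.
  move=> s; apply: addr_ge0; first by apply: mulr_ge0; exact: expR_ge0.
  by apply: sumr_ge0 => j _; apply: mulr_ge0; exact: expR_ge0.
have Phi1 : forall s, ~~ (regret alpha lambda f c s <= B) -> 1 <= Phi s.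
  move=> s hbad.
  have t1 : 0 <= expR (- th1) * expR (psum s z1) by apply: mulr_ge0; exact: expR_ge0.
  have t2 : 0 <= \sum_(j : I) expR (- th2) * expR (psum s (z2 j)).
    by apply: sumr_ge0 => j _; apply: mulr_ge0; exact: expR_ge0.
  case: (boolP (psum s z1 <= th1)) => h1; last first.
    have k1 : 1 <= expR (- th1) * expR (psum s z1).
      rewrite -expRD; apply: expR_ge1'; rewrite -ltNge in h1; lra.
    rewrite /Phi; lra.
  case: (pickP (fun j => ~~ (psum s (z2 j) <= th2))) => [j hj | hall]; last first.
    have := Hdet s h1 (fun j => negbFE (hall j)).
    by rewrite (negbTE hbad).
  have k2 : 1 <= expR (- th2) * expR (psum s (z2 j)).
    rewrite -expRD; apply: expR_ge1'; rewrite -ltNge in hj; lra.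
  have t3 : 0 <= \sum_(i | i != j) expR (- th2) * expR (psum s (z2 i)).
    by apply: sumr_ge0 => i _; apply: mulr_ge0; exact: expR_ge0.
  rewrite /Phi (bigD1 j) //=; lra.
have tot := @path_prob_total R n alpha lambda eta gamma f c T [::].
rewrite (bigID (fun s => regret alpha lambda f c s <= B)) /= in tot.
rewrite /prob_regret_le.
have hb : \sum_(s : T.-tuple I | ~~ (regret alpha lambda f c s <= B)) pp s <=
   expR (- th1) + (n.+1)%:R * expR (- th2).
  have s1 : \sum_(s : T.-tuple I | ~~ (regret alpha lambda f c s <= B)) pp s <=
      \sum_(s : T.-tuple I | ~~ (regret alpha lambda f c s <= B)) pp s * Phi s.
    apply: ler_sum => s hs.
    by rewrite -[X in X <= _]mulr1 ler_wpM2l ?Phi1 ?path_prob_ge0.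
  have s2 : \sum_(s : T.-tuple I | ~~ (regret alpha lambda f c s <= B)) pp s * Phi s <=
      \sum_(s : T.-tuple I) pp s * Phi s.
    rewrite [leRHS](bigID (fun s => regret alpha lambda f c s <= B)) /= lerDr.
    by apply: sumr_ge0 => s _; apply: mulr_ge0; [exact: path_prob_ge0 | exact: Phi0].
  have s3 : \sum_(s : T.-tuple I) pp s * Phi s =
      expR (- th1) * \sum_(s : T.-tuple I) pp s * expR (psum s z1) +
      \sum_(j : I) expR (- th2) * \sum_(s : T.-tuple I) pp s * expR (psum s (z2 j)).
    rewrite /Phi.
    under eq_bigr => s _ do rewrite mulrDr mulr_sumr.
    rewrite big_split /= mulr_sumr exchange_big /=; congr (_ + _).
      by apply: eq_bigr => s _; rewrite mulrCA.
    by apply: eq_bigr => j _; rewrite mulr_sumr; apply: eq_bigr => s _; rewrite mulrCA.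
  have s4 : \sum_(s : T.-tuple I) pp s * expR (psum s z1) <= 1.
    apply: sm_bound => t h; exact: conc1.
  have s5 : \sum_(j : I) expR (- th2) * \sum_(s : T.-tuple I) pp s * expR (psum s (z2 j))
      <= (n.+1)%:R * expR (- th2).
    have -> : (n.+1)%:R * expR (- th2) = \sum_(j : I) expR (- th2) * 1.
      by rewrite sumr_const card_ord mulr1 mulr_natl.
    apply: ler_sum => j _; apply: ler_wpM2l; first exact: expR_ge0.
    apply: sm_bound => t h; exact: conc2.
  have e1 := expR_ge0 (- th1).
  have s6 := ler_wpM2l e1 s4.
  lra.
lra.
Qed.
End Prob.

Lemma regret_le (R : realType) (n : nat) alpha lambda (f c : nat -> seq 'I_n.+1 -> R)
  (T : nat) (s : T.-tuple 'I_n.+1) (B : R) :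
  (forall j, learner_loss alpha lambda f c s - fixed_loss alpha lambda f c s j <= B) ->
  regret alpha lambda f c s <= B.
Proof.
move=> hj; rewrite /regret.
have : learner_loss alpha lambda f c s - B <=
    \big[Num.min/fixed_loss alpha lambda f c s ord0]_(k : 'I_n.+1) fixed_loss alpha lambda f c s k.
  apply/bigmin_geP; split => [|k _]; [have := hj ord0 | have := hj k]; lra.
lra.
Qed.

Theorem theorem4 (R : realType) (n T : nat) (alpha lambda delta : R)
  (f c : nat -> seq 'I_n.+1 -> R) :
  (1 <= n)%N ->
  0 < alpha < 1 -> 0 <= lambda -> 0 < delta < 1 ->
  (forall t h, 0 <= f t h < 1) ->
  (forall t h, 0 <= c t h <= 1) ->
  let H := n.+1 in
  let eta := Num.sqrt (ln H%:R / T%:R) in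
  let gamma := eta / 2 in
  prob_regret_le alpha lambda eta gamma f c T
    (4 * Num.sqrt (T%:R * ln H%:R)
     + (1 + Num.sqrt (T%:R / ln H%:R)) * ln (2 / delta))
  >= 1 - delta.
Proof.
move=> hn /andP[a0 a1] lam0 /andP[d0 d1] hf hc.
have hd2 : 1 < 2 / delta.
  by rewrite ltr_pdivlMr // mul1r; lra.
have hd2' : 0 < 2 / delta by lra.
have lt0 : 0 < ln (2 / delta) := ln_gt0 hd2.
have hN : 1 < (n.+1)%:R :> R by rewrite ltr1n ltnS.
have lN0 : 0 < ln (n.+1)%:R :> R := ln_gt0 hN.
cbv zeta.
case: T => [|T].
  rewrite /prob_regret_le big_mkcond sum_tuple_0 /=.
  have -> : regret alpha lambda f c [tuple] <=
      4 * Num.sqrt (0%:R * ln (n.+1)%:R) + (1 + Num.sqrt (0%:R / ln (n.+1)%:R)) * ln (2 / delta).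
    apply: regret_le => j.
    rewrite /learner_loss /fixed_loss !big_ord0 !mul0r !sqrtr0 mulr0 add0r addr0 mul1r.
    lra.
  lra.
set eta := Num.sqrt (ln (n.+1)%:R / (T.+1)%:R).
set gamma := eta / 2.
set TT := (T.+1)%:R : R.
have TT0 : 0 < TT by rewrite /TT ltr0n.
set lN := ln (n.+1)%:R : R.
have lN0' : 0 < lN := lN0.
have hq : 0 <= lN / TT by apply: divr_ge0; lra.
have eta0 : 0 < eta by rewrite /eta sqrtr_gt0; apply: divr_gt0.
have g0 : 0 < gamma by rewrite /gamma; lra.
have heta : eta = 2 * gamma by rewrite /gamma; field.
have eta2 : eta ^+ 2 = lN / TT by rewrite /eta sqr_sqrtr.
have etaA : eta * Num.sqrt (TT * lN) = lN.
  rewrite /eta -sqrtrM // (_ : lN / TT * (TT * lN) = lN ^+ 2).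
    by rewrite sqrtr_sqr ger0_norm //; lra.
  field; apply/eqP => hh; lra.
have etaB : eta * Num.sqrt (TT / lN) = 1.
  rewrite /eta -sqrtrM // (_ : lN / TT * (TT / lN) = 1) ?sqrtr1 //.
  field; apply/andP; split; apply/eqP => hh; lra.
set th1 := ln (2 / delta).
set th2 := lN + th1.
apply: le_trans (@prob_main R n alpha lambda eta gamma f c g0 (ltW eta0) lam0 (ltW a0) (ltW a1) hc
   T.+1 th1 th2 _ _).
  have e1 : expR (- th1) = delta / 2.
    by rewrite expRN /th1 lnK ?invf_div //; rewrite posrE.
  have e2 : (n.+1)%:R * expR (- th2) = delta / 2.
    rewrite /th2 opprD expRD e1 expRN /lN lnK ?posrE ?ltr0n // mulrA mulfV ?mul1r //.
    by rewrite pnatr_eq0.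
  rewrite e1 e2; lra.
move=> s h1 h2.
apply: regret_le => j.
have hdet := @det_bound R n alpha lambda eta gamma f c g0 (ltW eta0) lam0 (ltW a0) (ltW a1)
   hc heta T.+1 s th1 th2 h1 h2 j.
rewrite -/TT -/lN in hdet.
rewrite -(ler_pM2l eta0).
have e3 : eta * (4 * Num.sqrt (TT * lN) + (1 + Num.sqrt (TT / lN)) * th1)
    = 4 * (eta * Num.sqrt (TT * lN)) + th1 * (eta * Num.sqrt (TT / lN)) + eta * th1.
  by ring.
rewrite e3 etaA etaB.
have e4 : 2 * eta ^+ 2 * TT = 2 * lN by rewrite eta2; field; apply/eqP => hh; lra.
rewrite e4 /th2 in hdet.
lra.
Qed.
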